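(* Let $H$ be a complex Hilbert space and let $\mathcal S(H)$ be the set of bounded self-adjoint operators on $H$, ordered by the logical order $\preceq$. Suppose that $\mathcal T \subseteq \mathcal S(H)$, $\mathcal T \neq \varnothing$, and that $B \in \mathcal S(H)$ is an upper bound of $\mathcal T$ with respect to $\preceq$. Then the operators $B\big(\bigwedge(P_A : A \in \mathcal T)\big)$ and $B\big(\bigvee(P_A : A \in \mathcal T)\big)$ belong to $\mathcal S(H)$, and (a) $B\big(\bigwedge(P_A : A \in \mathcal T)\big)$ is the greatest lower bound of $\mathcal T$ in $(\mathcal S(H),\preceq)$; (b) $B\big(\bigvee(P_A : A \in \mathcal T)\big)$ is the least upper bound of $\mathcal T$ in $(\mathcal S(H),\preceq)$.
   Context: For $A \in \mathcal S(H)$, $P_A$ denotes the orthogonal projection onto the closure of the range of $A$. The set of all orthogonal projections on $H$ is a complete lattice under the usual order ($P_1 \le P_2$ iff $P_1P_2 = P_1$); $\bigwedge$ and $\bigvee$ denote meet and join in this lattice. For $A,B \in \mathcal S(H)$, write $A \perp B$ if $AB = O$ (the zero operator). The logical order is defined by $A \preceq B$ iff $B = A + C$ for some $C \in \mathcal S(H)$ with $C \perp A$; equivalently, $A = BP_A$. Products such as $BP$ denote operator composition. *)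

(* Defs.v *)
From mathcomp Require Import all_boot all_algebra.
From mathcomp Require Import reals complex.
From Stdlib Require Import ClassicalEpsilon.
Import GRing.Theory Num.Theory.
Set Implicit Arguments. Unset Strict Implicit. Unset Printing Implicit Defensive.
Local Open Scope ring_scope.
Local Open Scope complex_scope.

Section Hilbert.
Variables (R : realType) (V : lmodType R[i]) (ip : V -> V -> R[i]).

(* ip is an inner product (linear in the first argument) and V is complete
   for the induced norm ||x|| = sqrt <x,x> (stated with squared norms). *)
Definition is_Hilbert : Prop :=
  [/\ (forall (a : R[i]) x y z, ip (a *: x + y) z = a * ip x z + ip y z),
      (forall x y, ip y x = (ip x y)^*),
      (forall x, 0 <= ip x x),
      (forall x, ip x x = 0 -> x = 0) &
      (forall u : nat -> V,
         (forall e : R[i], 0 < e -> exists N : nat, forall m n : nat,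
            (N <= m)%N -> (N <= n)%N -> ip (u m - u n) (u m - u n) < e) ->
         exists l : V, forall e : R[i], 0 < e -> exists N : nat, forall n : nat,
            (N <= n)%N -> ip (u n - l) (u n - l) < e)].

Definition bounded_op (A : V -> V) : Prop :=
  (forall (a : R[i]) x y, A (a *: x + y) = a *: A x + A y) /\
  exists M : R[i], 0 <= M /\ forall x, ip (A x) (A x) <= M * ip x x.

Definition selfadj (A : V -> V) : Prop :=
  bounded_op A /\ forall x y, ip (A x) y = ip x (A y).

Definition op_perp (A B : V -> V) : Prop := forall x, A (B x) = 0.

Definition log_le (A B : V -> V) : Prop :=
  exists C : V -> V, selfadj C /\ op_perp C A /\ B = (fun x => A x + C x).

Definition is_proj (P : V -> V) : Prop := selfadj P /\ forall x, P (P x) = P x.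
Definition proj_le (P1 P2 : V -> V) : Prop := forall x, P1 (P2 x) = P1 x.

Definition clrange (A : V -> V) (y : V) : Prop :=
  forall e : R[i], 0 < e -> exists x, ip (A x - y) (A x - y) < e.

Definition projP (A : V -> V) : V -> V :=
  epsilon (inhabits (fun x : V => x))
    (fun P => is_proj P /\ forall y, (exists x, P x = y) <-> clrange A y).

Definition proj_meet (F : (V -> V) -> Prop) : V -> V :=
  epsilon (inhabits (fun x : V => x))
    (fun Q => is_proj Q /\ (forall P, F P -> proj_le Q P) /\
       (forall Q', is_proj Q' -> (forall P, F P -> proj_le Q' P) -> proj_le Q' Q)).
Definition proj_join (F : (V -> V) -> Prop) : V -> V :=
  epsilon (inhabits (fun x : V => x))
    (fun Q => is_proj Q /\ (forall P, F P -> proj_le P Q) /\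
       (forall Q', is_proj Q' -> (forall P, F P -> proj_le P Q') -> proj_le Q Q')).

Definition projs_of (T : (V -> V) -> Prop) (P : V -> V) : Prop :=
  exists A, T A /\ P = projP A.

Definition is_glb (T : (V -> V) -> Prop) (G : V -> V) : Prop :=
  selfadj G /\ (forall A, T A -> log_le G A) /\
  (forall G', selfadj G' -> (forall A, T A -> log_le G' A) -> log_le G' G).
Definition is_lub (T : (V -> V) -> Prop) (G : V -> V) : Prop :=
  selfadj G /\ (forall A, T A -> log_le A G) /\
  (forall G', selfadj G' -> (forall A, T A -> log_le A G') -> log_le G G').

End Hilbert.

(* Main.v *)
Require Import Defs.
From mathcomp Require Import all_boot all_order all_algebra.
From mathcomp Require Import reals complex classical_sets.
From mathcomp Require Import ring lra.
From Stdlib Require Import ClassicalEpsilon FunctionalExtensionality.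
Import Order.TTheory GRing.Theory Num.Theory.
Set Implicit Arguments. Unset Strict Implicit. Unset Printing Implicit Defensive.
Local Open Scope ring_scope.
Local Open Scope complex_scope.

Section S.
Variables (R : realType) (V : lmodType R[i]) (ip : V -> V -> R[i]).
Hypothesis hH : is_Hilbert ip.

Lemma ip_lin a x y z : ip (a *: x + y) z = a * ip x z + ip y z.
Proof. by case: hH. Qed.
Lemma ip_conj x y : ip y x = (ip x y)^*.
Proof. by case: hH. Qed.
Lemma ip_ge0 x : 0 <= ip x x.
Proof. by case: hH. Qed.
Lemma ip_eq0 x : ip x x = 0 -> x = 0.
Proof. by case: hH => _ _ _ H _; apply: H. Qed.

Lemma ip0l z : ip 0 z = 0.
Proof.
have := ip_lin 1 0 0 z; rewrite scaler0 addr0 mul1r -{1}[ip 0 z]addr0.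
by move/addrI => <-.
Qed.
Lemma ipDl x y z : ip (x + y) z = ip x z + ip y z.
Proof. by rewrite -[x]scale1r ip_lin mul1r scale1r. Qed.
Lemma ipZl a x z : ip (a *: x) z = a * ip x z.
Proof. by rewrite -[a *: x]addr0 ip_lin ip0l addr0. Qed.
Lemma ipNl x z : ip (- x) z = - ip x z.
Proof. by rewrite -scaleN1r ipZl mulN1r. Qed.
Lemma ipBl x y z : ip (x - y) z = ip x z - ip y z.
Proof. by rewrite ipDl ipNl. Qed.
Lemma ip0r z : ip z 0 = 0.
Proof. by rewrite ip_conj ip0l conjc0. Qed.
Lemma ipDr x y z : ip z (x + y) = ip z x + ip z y.
Proof. by rewrite ip_conj ipDl rmorphD /= -!ip_conj. Qed.
Lemma ipZr a x z : ip z (a *: x) = a^* * ip z x.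
Proof. by rewrite ip_conj ipZl rmorphM /= -!ip_conj. Qed.
Lemma ipNr x z : ip z (- x) = - ip z x.
Proof. by rewrite ip_conj ipNl rmorphN /= -!ip_conj. Qed.
Lemma ipBr x y z : ip z (x - y) = ip z x - ip z y.
Proof. by rewrite ipDr ipNr. Qed.

Definition N x : R := complex.Re (ip x x).
Definition Rp x y : R := complex.Re (ip x y).

Lemma ipNE x : ip x x = (N x)%:C.
Proof. have := ip_ge0 x; rewrite /N; case: (ip x x) => a b /=.
by rewrite lecE /= => /andP[/eqP -> _]. Qed.
Lemma N_ge0 x : 0 <= N x.
Proof. by have := ip_ge0 x; rewrite ipNE lecR. Qed.
Lemma N_eq0 x : N x = 0 -> x = 0.
Proof. by move=> h; apply: ip_eq0; rewrite ipNE h. Qed.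
Lemma RpC x y : Rp x y = Rp y x.
Proof. by rewrite /Rp ip_conj; case: (ip _ _). Qed.
Lemma RpDl x y z : Rp (x + y) z = Rp x z + Rp y z.
Proof. by rewrite /Rp ipDl; move: (ip x z) (ip y z) => [a b] [c d]. Qed.
Lemma RpDr x y z : Rp z (x + y) = Rp z x + Rp z y.
Proof. by rewrite RpC RpDl !(RpC z). Qed.
Lemma RpZl (s : R) x z : Rp (s%:C *: x) z = s * Rp x z.
Proof. by rewrite /Rp ipZl; move: (ip x z) => [a b] /=; rewrite mul0r subr0. Qed.
Lemma RpZr (s : R) x z : Rp z (s%:C *: x) = s * Rp z x.
Proof. by rewrite RpC RpZl RpC. Qed.
Lemma RpNl x z : Rp (- x) z = - Rp x z.
Proof. by rewrite /Rp ipNl; move: (ip x z) => [a b]. Qed.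
Lemma RpNr x z : Rp z (- x) = - Rp z x.
Proof. by rewrite RpC RpNl RpC. Qed.
Lemma RpBl x y z : Rp (x - y) z = Rp x z - Rp y z.
Proof. by rewrite RpDl RpNl. Qed.
Lemma RpBr x y z : Rp z (x - y) = Rp z x - Rp z y.
Proof. by rewrite RpDr RpNr. Qed.
Lemma RpNE x : Rp x x = N x.
Proof. by []. Qed.
Lemma ND x y : N (x + y) = N x + N y + 2 * Rp x y.
Proof. rewrite -!RpNE !(RpDl, RpDr) (RpC y x); lra. Qed.
Lemma NB x y : N (x - y) = N x + N y - 2 * Rp x y.
Proof. rewrite -!RpNE !(RpBl, RpBr) (RpC y x); lra. Qed.
Lemma NN x : N (- x) = N x.
Proof. by rewrite -!RpNE RpNl RpNr opprK. Qed.
Lemma NZ (s : R) x : N (s%:C *: x) = s ^+ 2 * N x.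
Proof. by rewrite -!RpNE RpZl RpZr mulrA expr2. Qed.

Lemma invS_le k n : (k <= n)%N -> ((n.+1)%:R : R)^-1 <= ((k.+1)%:R)^-1.
Proof. by move=> kn; rewrite lef_pV2 ?posrE ?ltr0Sn // ler_nat ltnS. Qed.
Lemma invS_gt0 n : 0 < ((n.+1)%:R : R)^-1.
Proof. by rewrite invr_gt0 ltr0Sn. Qed.
Lemma archi (e : R) : 0 < e -> exists k : nat, ((k.+1)%:R : R)^-1 < e.
Proof. by move=> /ltr_add_invr [k]; rewrite add0r; exists k. Qed.

Lemma amgm a b (t : R) : 0 < t -> 2 * Rp a b <= t * N a + N b / t.
Proof.
move=> t0; have := N_ge0 (t%:C *: a - b); rewrite NB NZ RpZl => h.
have e : N b / t * t = N b by rewrite mulfVK // lt0r_neq0.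
rewrite -(ler_pM2r t0) [(_ + N b / t) * t]mulrDl e; nra.
Qed.

Lemma N_add_le a b (D t : R) : 0 < t -> N a <= D ->
  N (a + b) <= N a + t * D + N b / t + N b.
Proof.
move=> t0 aD; rewrite ND; have := amgm a b t0.
have : t * N a <= t * D by rewrite ler_pM2l.
lra.
Qed.

Lemma N_add2 a b : N (a + b) <= 2 * N a + 2 * N b.
Proof. have := amgm a b (ltr01 : (0:R) < 1); rewrite ND invr1 !mul1r mulr1; lra. Qed.

Lemma complete (u : nat -> V) :
  (forall e : R, 0 < e -> exists M, forall m n, (M <= m)%N -> (M <= n)%N -> N (u m - u n) < e) ->
  exists l, forall e : R, 0 < e -> exists M, forall n, (M <= n)%N -> N (u n - l) < e.
Proof.
move=> hc; case: hH => _ _ _ _ /(_ u) [].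
  move=> e; rewrite ltcE /= => /andP[/eqP ie re].
  have [M hM] := hc _ re; exists M => m n hm hn.
  rewrite ipNE ltcE /= ie eqxx /=; exact: hM.
move=> l hl; exists l => e e0.
have [|M hM] := hl (e%:C); first by rewrite ltcR.
exists M => n hn; have := hM n hn; by rewrite ipNE ltcR.
Qed.

Definition closedsub (K : V -> Prop) :=
  [/\ K 0, (forall a x y, K x -> K y -> K (a *: x + y)) &
      (forall y, (forall e : R, 0 < e -> exists k, K k /\ N (k - y) < e) -> K y)].

Lemma proj_exists K : closedsub K -> forall y, exists z, K z /\ forall k, K k -> ip (y - z) k = 0.
Proof.
rewrite /closedsub; case=> K0 Klin Kcl y.
pose E : set R := fun r => exists k, K k /\ r = N (y - k).
have hlb : lbound E 0 by move=> r [k [_ ->]]; exact: N_ge0.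
have hinf : has_inf E.
  split; first by exists (N (y - 0)); exists 0.
  by exists 0.
pose d := inf E.
have d0 : 0 <= d by apply: lb_le_inf => //; case: hinf.
have dle k : K k -> d <= N (y - k).
  by move=> Kk; apply: (ge_inf (proj2 hinf)); exists k.
have hn n : exists k, K k /\ N (y - k) < d + ((n.+1)%:R)^-1.
  have [r [k [Kk ->]] hr] := inf_adherent (invS_gt0 n) hinf; by exists k.
pose ks n := proj1_sig (constructive_indefinite_description _ (hn n)).
have hks n : K (ks n) /\ N (y - ks n) < d + ((n.+1)%:R)^-1
  := proj2_sig (constructive_indefinite_description _ (hn n)).
have par m n : N (ks m - ks n) <= 2 * ((m.+1)%:R)^-1 + 2 * ((n.+1)%:R)^-1.
  pose mid := (2^-1 : R[i]) *: (ks m + ks n).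
  have Kmid : K mid.
    rewrite /mid scalerDr; apply: (Klin); first by case: (hks m).
    by rewrite -[_ *: ks n]addr0; apply: (Klin) => //; case: (hks n).
  have hm : mid + mid = ks m + ks n.
    rewrite /mid -scalerDl.
    have -> : (2^-1 + 2^-1 : R[i]) = 1 by rewrite [RHS](splitr 1) mul1r.
    by rewrite scale1r.
  have e1 : (y - ks m) + (y - ks n) = (y - mid) + (y - mid).
    by rewrite addrACA [RHS]addrACA -!opprD hm.
  have e2 : (y - ks n) - (y - ks m) = ks m - ks n.
    by rewrite opprB addrC addrA subrK.
  have p1 := ND (y - ks m) (y - ks n); rewrite e1 ND RpNE in p1.
  have p2 := NB (y - ks n) (y - ks m); rewrite e2 (RpC (y - ks n)) in p2.
  have := dle _ Kmid; have := hks m; have := hks n; move=> [_ hb1] [_ hb2] hmid; move: hmid p1 p2 hb1 hb2; rewrite -/(N (y - mid)); set im := m.+1%:R^-1; set iN := n.+1%:R^-1; set a := N (y - mid); lra.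
have cauchy : forall e : R, 0 < e -> exists M, forall m n, (M <= m)%N -> (M <= n)%N ->
    N (ks m - ks n) < e.
  move=> e e0; have [|M hM] := archi (e := e / 4); first lra.
  exists M => m n hm1 hn1; have := par m n; have := invS_le hm1; have := invS_le hn1; set a1 := M.+1%:R^-1; set a2 := m.+1%:R^-1; set a3 := n.+1%:R^-1; move: hM; rewrite -/a1; lra.
have [l hl] := complete cauchy.
have Kl : K l.
  apply: (Kcl) => e e0; have [M hM] := hl e e0; exists (ks M); split; last exact: hM.
  by case: (hks M).
have dl : N (y - l) <= d.
  rewrite leNgt; apply/negP => hlt.
  pose g := N (y - l) - d.
  have g0 : 0 < g by rewrite /g subr_gt0.
  pose t := g / (4 * (d + 1)).
  have t0 : 0 < t by rewrite /t divr_gt0 // mulr_gt0 //; lra.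
  have [M1 h1] := archi (e := g / 4) ltac:(lra).
  have [M2 h2] := hl (g * t / 4) ltac:(by rewrite divr_gt0 // mulr_gt0).
  have [M3 h3] := hl (g / 4) ltac:(lra).
  pose n := maxn M1 (maxn M2 M3).
  have hn1 : (M1 <= n)%N by rewrite leq_maxl.
  have hn2 : (M2 <= n)%N by rewrite /n (leq_trans _ (leq_maxr _ _)) // leq_maxl.
  have hn3 : (M3 <= n)%N by rewrite /n (leq_trans _ (leq_maxr _ _)) // leq_maxr.
  have ea : (y - ks n) + (ks n - l) = y - l by rewrite addrA subrK.
  have Na1 : N (y - ks n) <= d + 1.
    have hq2 : (n.+1%:R : R)^-1 <= 1 by rewrite invf_le1 ?ltr0Sn // ler1n.
    have := hks n; move=> [_ hq1]; move: hq1 hq2; set a1 := n.+1%:R^-1; lra.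
  have := N_add_le (ks n - l) t0 Na1; rewrite ea.
  have tD : t * (d + 1) = g / 4.
    rewrite /t invfM -mulrA -mulrA mulVf ?mulr1 //; apply: lt0r_neq0; lra.
  have hb : N (ks n - l) / t < g / 4.
    by rewrite ltr_pdivrMr // mulrAC; apply: h2.
  have := h3 _ hn3; have := invS_le hn1; have := hks n; move=> [_ hq1] hq2 hq3.
  move: hq1 hq2 hq3 hb tD h1; rewrite /g; set a1 := n.+1%:R^-1; set a2 := M1.+1%:R^-1; lra.
have var k : K k -> Rp (y - l) k = 0.
  move=> Kk; pose w := y - l; pose r := Rp w k.
  pose t := r / (N k + 1).
  have Nk0 := N_ge0 k.
  have er : r = t * (N k + 1) by rewrite /t mulfVK //; lra.
  have := dle _ (Klin t%:C k l Kk Kl).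
  have e3 : y - (t%:C *: k + l) = w - t%:C *: k by rewrite opprD addrCA addrC.
  rewrite e3 NB NZ RpZr -/r => h.
  have h4 : t * t <= 0 by nra.
  have : t = 0 by nra.
  by rewrite -/w -/r er => ->; rewrite mul0r.
exists l; split => // k Kk.
have h1 := var k Kk; have h2 := var _ (Klin 'i k 0 Kk K0); rewrite addr0 in h2.
move: h1 h2; rewrite /Rp ipZr; case: (ip (y - l) k) => a b /= -> h.
by move: h; rewrite mul0r mulN1r sub0r opprK => ->.
Qed.

Definition projK (K : V -> Prop) (y : V) : V :=
  epsilon (inhabits (0 : V)) (fun z => K z /\ forall k, K k -> ip (y - z) k = 0).

Lemma projK_spec K : closedsub K -> forall y,
  K (projK K y) /\ forall k, K k -> ip (y - projK K y) k = 0.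
Proof. by move=> hK y; apply: (epsilon_spec (inhabits (0 : V)) _ (proj_exists hK y)). Qed.

Lemma projK_uniq K : closedsub K -> forall y z, K z ->
  (forall k, K k -> ip (y - z) k = 0) -> projK K y = z.
Proof.
move=> hK y z Kz hz; have [Kp hp] := projK_spec hK y.
have [_ Klin _] := hK.
have Ku : K (z - projK K y) by rewrite addrC -scaleN1r; apply: Klin.
have : ip (y - z) (z - projK K y) - ip (y - projK K y) (z - projK K y) = 0.
  by rewrite hz // hp // subrr.
rewrite -ipBl.
have -> : y - z - (y - projK K y) = - (z - projK K y).
  by rewrite opprB addrC addrA subrK opprB.
rewrite ipNl => /eqP; rewrite oppr_eq0 => /eqP /ip_eq0 /eqP.
by rewrite subr_eq0 => /eqP.
Qed.

Definition symm (A : V -> V) := forall x y, ip (A x) y = ip x (A y).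

Lemma proj_thm K : closedsub K ->
  exists P, is_proj ip P /\ (forall x, K (P x)) /\ (forall x, K x -> P x = x).
Proof.
move=> hK; have [K0 Klin Kcl] := hK.
pose P := projK K.
have hs := projK_spec hK.
have orth x k : K k -> ip k (x - P x) = 0.
  by move=> Kk; rewrite ip_conj (proj2 (hs x)) // conjc0.
exists P; split; last split.
- split; last first.
    move=> x; apply: projK_uniq => //; first by case: (hs x).
    by move=> k _; rewrite subrr ip0l.
  split; last first.
    move=> x y; rewrite -{1}(subrK (P y) y) ipDr orth ?ipDl; last by case: (hs x).
    rewrite -{2}(subrK (P x) x) ipDl (proj2 (hs x)) ?add0r ?addr0 //.
    by case: (hs y).
  split.
    move=> a x y; apply: projK_uniq => //.
      by apply: Klin; [case: (hs x) | case: (hs y)].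
    move=> k Kk.
    have -> : a *: x + y - (a *: P x + P y) = a *: (x - P x) + (y - P y).
      by rewrite scalerBr opprD addrACA.
    by rewrite ip_lin !(proj2 (hs _)) // mulr0 addr0.
  exists 1; split => // x; rewrite mul1r !ipNE lecR.
  have e : x = P x + (x - P x) by rewrite addrC subrK.
  have : N x = N (P x) + N (x - P x) + 2 * Rp (P x) (x - P x) by rewrite -ND -e.
  rewrite /Rp orth; last by case: (hs x).
  move=> h2; have h1 := N_ge0 (x - P x); move: h2; rewrite [complex.Re 0]/= => h2; lra.
- by move=> x; case: (hs x).
- move=> x Kx; apply: projK_uniq => //.
  by move=> k _; rewrite subrr ip0l.
Qed.

Definition lin (A : V -> V) := forall (a : R[i]) x y, A (a *: x + y) = a *: A x + A y.

Lemma lin0 A : lin A -> A 0 = 0.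
Proof.
move=> h; have := h 1 0 0; rewrite scaler0 addr0 scale1r -{1}[A 0]addr0.
by move/addrI => <-.
Qed.
Lemma linD A : lin A -> forall x y, A (x + y) = A x + A y.
Proof. by move=> h x y; rewrite -[x]scale1r h !scale1r. Qed.
Lemma linZ A : lin A -> forall a x, A (a *: x) = a *: A x.
Proof. by move=> h a x; rewrite -[a *: x]addr0 h lin0 // addr0. Qed.
Lemma linN A : lin A -> forall x, A (- x) = - A x.
Proof. by move=> h x; rewrite -scaleN1r linZ // scaleN1r. Qed.
Lemma linB A : lin A -> forall x y, A (x - y) = A x - A y.
Proof. by move=> h x y; rewrite linD // linN. Qed.

Lemma bndE A : bounded_op ip A <->
  lin A /\ exists M : R, 0 <= M /\ forall x, N (A x) <= M * N x.
Proof.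
split.
  case=> hl [[a b] [M0 hM]]; split => //.
  have b0 : b = 0 by have := ger0_Im M0.
  subst b; exists a; split; first by rewrite -lecR.
  by move=> x; have := hM x; rewrite !ipNE -[(a +i* 0)%C]/(a%:C) -rmorphM /= lecR.
case=> hl [M [M0 hM]]; split => //; exists M%:C; split; first by rewrite lecR.
by move=> x; rewrite !ipNE -rmorphM /= lecR.
Qed.

Lemma small (t : R) : 0 <= t -> (forall e, 0 < e -> t < e) -> t = 0.
Proof.
move=> t0 h; apply/eqP; rewrite eq_le t0 andbT leNgt; apply/negP => tp.
by have := h t tp; rewrite ltxx.
Qed.

Lemma ip_ext u v : (forall y, ip u y = ip v y) -> u = v.
Proof.
move=> h; apply/eqP; rewrite -subr_eq0; apply/eqP/ip_eq0.
by rewrite ipBl h subrr.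
Qed.
Lemma ip_extr u v : (forall y, ip y u = ip y v) -> u = v.
Proof. by move=> h; apply: ip_ext => y; rewrite ip_conj h -ip_conj. Qed.

Lemma NZc (a : R[i]) x : N (a *: x) = complex.Re (a * a^*) * N x.
Proof.
rewrite /N ipZl ipZr mulrA ipNE.
by case: a => p q /=; rewrite mulr0 subr0.
Qed.
Lemma Re_aa (a : R[i]) : 0 <= complex.Re (a * a^*).
Proof. by have := mulcJ_ge0 a; rewrite lecE => /andP[_]. Qed.

Definition clR (A : V -> V) y := forall e : R, 0 < e -> exists x, N (A x - y) < e.

Lemma clrangeE A y : clrange ip A y <-> clR A y.
Proof.
split.
  move=> h e e0; have [|x hx] := h e%:C; first by rewrite ltcR.
  by exists x; move: hx; rewrite ipNE ltcR.
move=> h e; rewrite ltcE /= => /andP[/eqP ie re].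
have [x hx] := h _ re; exists x; rewrite ipNE ltcE /= ie eqxx /=; exact: hx.
Qed.

Lemma clR_closed A : lin A -> closedsub (clR A).
Proof.
move=> hA; split.
- by move=> e e0; exists 0; rewrite lin0 // subrr /N ip0l.
- move=> a y1 y2 h1 h2 e e0.
  pose c := complex.Re (a * a^*).
  have c0 : 0 <= c := Re_aa a.
  have [|x1 hx1] := h1 (e / (4 * (c + 1))).
    by rewrite divr_gt0 // mulr_gt0 //; lra.
  have [|x2 hx2] := h2 (e / 4); first lra.
  exists (a *: x1 + x2).
  have -> : A (a *: x1 + x2) - (a *: y1 + y2) = a *: (A x1 - y1) + (A x2 - y2).
    by rewrite hA scalerBr opprD addrACA.
  apply: (le_lt_trans (N_add2 _ _)); rewrite NZc -/c.
  have hc : c * N (A x1 - y1) <= e / 4.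
    have : c * N (A x1 - y1) <= c * (e / (4 * (c + 1))).
      by rewrite ler_wpM2l // ltW.
    move/le_trans; apply.
    have q0 : 0 <= e / (4 * (c + 1)) by rewrite divr_ge0 //; [lra | rewrite mulr_ge0 //; lra].
    have hq : e / (4 * (c + 1)) * (4 * (c + 1)) = e by rewrite mulfVK //; apply: lt0r_neq0; lra.
    move: q0 hq; set q := e / (4 * (c + 1)) => q0 hq; clearbody q; rewrite -hq; nra.
  lra.
- move=> y h e e0.
  have [|k [hk1 hk2]] := h (e / 4); first lra.
  have [|x hx] := hk1 (e / 4); first lra.
  exists x; have -> : A x - y = (A x - k) + (k - y) by rewrite addrA subrK.
  apply: (le_lt_trans (N_add2 _ _)); lra.
Qed.

Definition bnd (A : V -> V) := exists M : R, 0 <= M /\ forall x, N (A x) <= M * N x.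

Lemma sel_lin A : selfadj ip A -> lin A.
Proof. by case=> /bndE []. Qed.
Lemma sel_bnd A : selfadj ip A -> bnd A.
Proof. by case=> /bndE []. Qed.
Lemma sel_sym A : selfadj ip A -> symm A.
Proof. by case. Qed.
Lemma mk_sel A : lin A -> bnd A -> symm A -> selfadj ip A.
Proof. by move=> h1 h2 h3; split => //; apply/bndE. Qed.

Lemma adj_swap S T U : symm S -> symm T -> symm U ->
  (forall x, S (T x) = U x) -> forall x, T (S x) = U x.
Proof.
move=> hS hT hU h x; apply: ip_ext => y.
by rewrite hT hS h hU.
Qed.

Lemma sel_comp S T : selfadj ip S -> selfadj ip T ->
  (forall x, S (T x) = T (S x)) -> selfadj ip (fun x => S (T x)).
Proof.
move=> hS hT hc; apply: mk_sel.
- by move=> a x y; rewrite (sel_lin hT) (sel_lin hS).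
- have [M1 [M10 h1]] := sel_bnd hS; have [M2 [M20 h2]] := sel_bnd hT.
  exists (M1 * M2); split; first exact: mulr_ge0.
  move=> x; apply: (le_trans (h1 _)); rewrite -mulrA ler_wpM2l //.
- by move=> x y; rewrite (sel_sym hS) (sel_sym hT) hc.
Qed.

Lemma sel_sub S T : selfadj ip S -> selfadj ip T -> selfadj ip (fun x => S x - T x).
Proof.
move=> hS hT; apply: mk_sel.
- by move=> a x y; rewrite (sel_lin hT) (sel_lin hS) scalerBr opprD addrACA.
- have [M1 [M10 h1]] := sel_bnd hS; have [M2 [M20 h2]] := sel_bnd hT.
  exists (2 * M1 + 2 * M2); split; first lra.
  move=> x; apply: (le_trans (N_add2 _ _)); rewrite NN.
  have := h1 x; have := h2 x; have := N_ge0 x.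
  move=> h3 h4 h5; nra.
- by move=> x y; rewrite ipBl ipBr (sel_sym hS) (sel_sym hT).
Qed.

Lemma sel_id : selfadj ip (fun x => x).
Proof.
by apply: mk_sel => //; exists 1; split => // x; rewrite mul1r.
Qed.

Lemma proj_compl P : is_proj ip P -> is_proj ip (fun x => x - P x).
Proof.
case=> hP hPP; split; first exact: (sel_sub sel_id hP).
move=> x; rewrite (linB (sel_lin hP)) hPP subrr subr0 //.
Qed.

Lemma zero_on_cl D A : lin D -> bnd D -> (forall z, D (A z) = 0) ->
  forall y, clR A y -> D y = 0.
Proof.
move=> hD [M [M0 hM]] h0 y hy; apply: N_eq0; apply: small; first exact: N_ge0.
move=> e e0; have [|x hx] := hy (e / (M + 1)).
  by rewrite divr_gt0 //; lra.
have -> : D y = D (- (A x - y)) by rewrite (linN hD) (linB hD) h0 sub0r opprK.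
rewrite (linN hD) NN; apply: (le_lt_trans (hM _)).
have q0 : 0 < e / (M + 1) by rewrite divr_gt0 //; lra.
have hq : e / (M + 1) * (M + 1) = e by rewrite mulfVK //; apply: lt0r_neq0; lra.
move: q0 hq hx; set q := e / (M + 1) => q0 hq hx; clearbody q.
have := N_ge0 (D (A x - y)); have := N_ge0 (A x - y); nra.
Qed.

Ltac vid := apply: ip_ext => ?; rewrite ?(ipBl, ipDl, ipNl, ipZl, ip0l); ring.

Lemma diff_trick (x y u v : V) : x - y = u - v -> u = v -> x = y.
Proof. by move=> h e; apply/eqP; rewrite -subr_eq0 h e subrr. Qed.

Lemma zero_on_set D (S : V -> Prop) : lin D -> bnd D -> (forall z, S z -> D z = 0) ->
  forall y, (forall e : R, 0 < e -> exists k, S k /\ N (k - y) < e) -> D y = 0.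
Proof.
move=> hD [M [M0 hM]] h0 y hy; apply: N_eq0; apply: small; first exact: N_ge0.
move=> e e0; have [|k [Sk hx]] := hy (e / (M + 1)).
  by rewrite divr_gt0 //; lra.
have -> : D y = D (- (k - y)) by rewrite (linN hD) (linB hD) (h0 k Sk) sub0r opprK.
rewrite (linN hD) NN; apply: (le_lt_trans (hM _)).
have q0 : 0 < e / (M + 1) by rewrite divr_gt0 //; lra.
have hq : e / (M + 1) * (M + 1) = e by rewrite mulfVK //; apply: lt0r_neq0; lra.
move: q0 hq hx; set q := e / (M + 1) => q0 hq hx; clearbody q.
have := N_ge0 (D (k - y)); have := N_ge0 (k - y); nra.
Qed.

Lemma projP_spec A : lin A -> is_proj ip (projP ip A) /\
  (forall y, (exists x, projP ip A x = y) <-> clrange ip A y).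
Proof.
move=> hA; apply: (epsilon_spec (inhabits (fun x : V => x))
  (fun P => is_proj ip P /\ forall y, (exists x, P x = y) <-> clrange ip A y)).
have [P [hP [h1 h2]]] := proj_thm (clR_closed hA).
exists P; split => // y; rewrite clrangeE; split; first by move=> [x <-].
by move=> hy; exists y; exact: h2.
Qed.

Lemma projP_proj A : lin A -> is_proj ip (projP ip A).
Proof. by move=> hA; case: (projP_spec hA). Qed.
Lemma projP_ran A : lin A -> forall x, clR A (projP ip A x).
Proof. by move=> hA x; apply/clrangeE; apply/(proj2 (projP_spec hA)); exists x. Qed.
Lemma projP_fix A : lin A -> forall y, clR A y -> projP ip A y = y.
Proof.
move=> hA y /clrangeE /(proj2 (projP_spec hA)) [x <-].
by case: (projP_spec hA) => [[_ ->]].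
Qed.
Lemma clR_A A : lin A -> forall z, clR A (A z).
Proof. by move=> hA z e e0; exists z; rewrite subrr /N ip0l. Qed.

Lemma K1 A : selfadj ip A -> forall x, A (projP ip A x) = A x.
Proof.
move=> hA x; have lA := sel_lin hA; have [[hP hPP] _] := projP_spec lA.
apply/eqP; rewrite eq_sym -subr_eq0 -(linB lA); apply/eqP; apply: ip_extr => y.
rewrite ip0r -(sel_sym hA) -(projP_fix lA (clR_A lA y)) (sel_sym hP).
by rewrite (linB (sel_lin hP)) hPP subrr ip0r.
Qed.

Lemma K2 A D : lin A -> lin D -> bnd D -> (forall z, D (A z) = 0) ->
  forall x, D (projP ip A x) = 0.
Proof. by move=> hA hD bD h x; apply: (zero_on_cl hD bD h); apply: projP_ran. Qed.

Lemma K3 A Q : lin A -> is_proj ip Q -> (forall z, Q (A z) = A z) ->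
  forall x, Q (projP ip A x) = projP ip A x.
Proof.
move=> hA hQ h x; have [hC _] := proj_compl hQ.
have := K2 hA (sel_lin hC) (sel_bnd hC) (fun z => ltac:(by rewrite /= h subrr)) x.
by move/eqP; rewrite subr_eq0 eq_sym => /eqP.
Qed.

Lemma meet_spec F : (forall P, F P -> is_proj ip P) ->
  is_proj ip (proj_meet ip F) /\ (forall P, F P -> proj_le (proj_meet ip F) P) /\
  (forall Q', is_proj ip Q' -> (forall P, F P -> proj_le Q' P) -> proj_le Q' (proj_meet ip F)).
Proof.
move=> hF; apply: (epsilon_spec (inhabits (fun x : V => x))
  (fun Q => is_proj ip Q /\ (forall P, F P -> proj_le Q P) /\
       (forall Q', is_proj ip Q' -> (forall P, F P -> proj_le Q' P) -> proj_le Q' Q))).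
pose K x := forall P, F P -> P x = x.
have hK : closedsub K.
  split.
  - by move=> P FP; apply: lin0 (sel_lin (proj1 (hF _ FP))).
  - by move=> a x y Kx Ky P FP; rewrite (sel_lin (proj1 (hF _ FP))) (Kx P FP) (Ky P FP).
  - move=> y hy P FP; have [hC _] := proj_compl (hF _ FP).
    have := zero_on_set (sel_lin hC) (sel_bnd hC) (S := K) _ hy.
    move=> /(_ (fun z Kz => ltac:(by rewrite /= Kz // subrr)))/eqP.
    by rewrite subr_eq0 eq_sym => /eqP.
have [Q [hQ [h1 h2]]] := proj_thm hK.
exists Q; split => //; split.
  move=> P FP x; have sP := sel_sym (proj1 (hF _ FP)); have sQ := sel_sym (proj1 hQ).
  by apply: (adj_swap sP sQ sQ) => z; apply: h1.
move=> Q' hQ' hle x.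
have sQ := sel_sym (proj1 hQ); have sQ' := sel_sym (proj1 hQ').
apply: (adj_swap sQ sQ' sQ') => z; apply: h2 => P FP.
have sP := sel_sym (proj1 (hF _ FP)).
exact: (adj_swap sQ' sP sQ' (hle P FP)).
Qed.

Lemma join_spec F : (forall P, F P -> is_proj ip P) ->
  is_proj ip (proj_join ip F) /\ (forall P, F P -> proj_le P (proj_join ip F)) /\
  (forall Q', is_proj ip Q' -> (forall P, F P -> proj_le P Q') -> proj_le (proj_join ip F) Q').
Proof.
move=> hF; apply: (epsilon_spec (inhabits (fun x : V => x))
  (fun Q => is_proj ip Q /\ (forall P, F P -> proj_le P Q) /\
       (forall Q', is_proj ip Q' -> (forall P, F P -> proj_le P Q') -> proj_le Q Q'))).
pose K x := forall P, F P -> P x = 0.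
have hK : closedsub K.
  split.
  - by move=> P FP; apply: lin0 (sel_lin (proj1 (hF _ FP))).
  - by move=> a x y Kx Ky P FP; rewrite (sel_lin (proj1 (hF _ FP))) (Kx P FP) (Ky P FP) scaler0 addr0.
  - move=> y hy P FP; have hP := proj1 (hF _ FP).
    exact: (zero_on_set (sel_lin hP) (sel_bnd hP) (S := K) (fun z Kz => Kz P FP) hy).
have [Q [hQ [h1 h2]]] := proj_thm hK.
exists (fun x => x - Q x); split; first exact: proj_compl.
split.
  move=> P FP x; have lP := sel_lin (proj1 (hF _ FP)).
  by rewrite (linB lP) h1 // subr0.
move=> Q' hQ' hle x.
have lQ := sel_lin (proj1 hQ); have lQ' := sel_lin (proj1 hQ').
have e : Q (x - Q' x) = x - Q' x.
  apply: h2 => P FP; have lP := sel_lin (proj1 (hF _ FP)).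
  by rewrite (linB lP) (hle P FP x) subrr.
rewrite (linB lQ) in e.
apply: (diff_trick _ e); vid.
Qed.

Lemma LE1 A B : selfadj ip A -> log_le ip A B -> forall x, B (projP ip A x) = A x.
Proof.
move=> hA [C [hC [hp ->]]] x.
rewrite (K1 hA) (K2 (sel_lin hA) (sel_lin hC) (sel_bnd hC) hp) addr0 //.
Qed.

Lemma LE2 A B P : selfadj ip A -> selfadj ip B -> is_proj ip P ->
  (forall x, B (P x) = A x) -> log_le ip A B.
Proof.
move=> hA hB [hP hPP] h.
have hPB := adj_swap (sel_sym hB) (sel_sym hP) (sel_sym hA) h.
exists (fun x => B x - A x); split; first exact: sel_sub.
split; last by apply: functional_extensionality => x; rewrite addrC subrK.
move=> x; rewrite /= -!(hPB x) -(h (P (B x))) hPP subrr //.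
Qed.

Lemma symm0 : symm (fun _ => 0).
Proof. by move=> x y; rewrite ip0l ip0r. Qed.

Lemma main (T : (V -> V) -> Prop) (B : V -> V) :
  (forall A, T A -> selfadj ip A) ->
  (exists A, T A) ->
  selfadj ip B ->
  (forall A, T A -> log_le ip A B) ->
  let M := proj_meet ip (projs_of ip T) in
  let J := proj_join ip (projs_of ip T) in
  [/\ selfadj ip (fun x => B (M x)),
      selfadj ip (fun x => B (J x)),
      is_glb ip T (fun x => B (M x)) &
      is_lub ip T (fun x => B (J x))].
Proof.
move=> hT [A0 TA0] hB hle M J.
have Fproj : forall P, projs_of ip T P -> is_proj ip P.
  by move=> P [A [TA ->]]; apply: projP_proj _ (sel_lin (hT A TA)).
have [hM [Mlow Mgreat]] := meet_spec Fproj.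
have [hJ [Jup Jleast]] := join_spec Fproj.
rewrite -/M in hM Mlow Mgreat; rewrite -/J in hJ Jup Jleast.
have sB := sel_sym hB; have lB := sel_lin hB.
have sM := sel_sym (proj1 hM); have lM := sel_lin (proj1 hM).
have sJ := sel_sym (proj1 hJ); have lJ := sel_lin (proj1 hJ).
have PAp A : T A -> is_proj ip (projP ip A) := fun TA => projP_proj (sel_lin (hT A TA)).
have FA A : T A -> projs_of ip T (projP ip A) by move=> TA; exists A.
have hBP A : T A -> forall x, B (projP ip A x) = A x.
  by move=> TA; apply: LE1 => //; [apply: hT | apply: hle].
have hPB A : T A -> forall x, projP ip A (B x) = A x.
  move=> TA; exact: (adj_swap sB (sel_sym (proj1 (PAp A TA))) (sel_sym (hT A TA)) (hBP A TA)).
have MP A : T A -> forall x, projP ip A (M x) = M x.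
  move=> TA; apply: (adj_swap sM (sel_sym (proj1 (PAp A TA))) sM).
  exact: Mlow _ (FA A TA).
have commM : forall x, B (M x) = M (B x).
  pose Z := fun x => B (M x).
  have lZ : lin Z by move=> a x y; rewrite /Z lM lB.
  pose Q := projP ip Z.
  have hQ : is_proj ip Q := projP_proj lZ.
  have sQ := sel_sym (proj1 hQ).
  have QM : forall x, M (Q x) = Q x.
    apply: (adj_swap sQ sM sQ); apply: Mgreat => // P [A [TA ->]].
    apply: (adj_swap (sel_sym (proj1 (PAp A TA))) sQ sQ).
    apply: (K3 lZ (PAp A TA)) => z.
    by rewrite /Z hPB // -(hBP A TA) MP.
  have MBM : forall x, M (B (M x)) = B (M x).
    move=> x; change (M (Z x) = Z x); have e := projP_fix lZ (clR_A lZ x).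
    by rewrite -/Q in e; rewrite -e QM.
  move=> x; apply: ip_ext => y.
  transitivity (ip x (B (M y))); first by rewrite -MBM sM sB sM MBM.
  by rewrite sM sB.
have selBM : selfadj ip (fun x => B (M x)) := sel_comp hB (proj1 hM) commM.
have JP A : T A -> forall x, J (projP ip A x) = projP ip A x.
  move=> TA; apply: (adj_swap (sel_sym (proj1 (PAp A TA))) sJ (sel_sym (proj1 (PAp A TA)))).
  exact: Jup _ (FA A TA).
have Jperp : forall Q, is_proj ip Q ->
    (forall A, T A -> forall x, Q (projP ip A x) = 0) -> forall x, J (Q x) = 0.
  move=> Q hQ hQA.
  have hle' : proj_le J (fun x => x - Q x).
    apply: Jleast; first exact: proj_compl hQ.
    move=> P [A [TA ->]] x; rewrite (linB (sel_lin (proj1 (PAp A TA)))).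
    by rewrite (adj_swap (sel_sym (proj1 hQ)) (sel_sym (proj1 (PAp A TA))) symm0 (hQA A TA)) subr0.
  move=> x; have := hle' x; rewrite (linB lJ) => e.
  apply/eqP; rewrite -oppr_eq0; apply/eqP; apply: (addrI (J x)); by rewrite addr0.
have commJ : forall x, B (J x) = J (B x).
  pose E := fun x => J (B (x - J x)).
  have lE : lin E.
    move=> a x y; rewrite /E lJ.
    have -> : a *: x + y - (a *: J x + J y) = a *: (x - J x) + (y - J y) by vid.
    by rewrite lB lJ.
  have PE0 A : T A -> forall x, projP ip A (E x) = 0.
    move=> TA x; have lP := sel_lin (proj1 (PAp A TA)).
    have e1 : forall w, projP ip A (J w) = projP ip A w := Jup _ (FA A TA).
    by rewrite /E e1 hPB // -(hBP A TA) (linB lP) e1 subrr (lin0 lB).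
  pose PE := projP ip E.
  have hPE : is_proj ip PE := projP_proj lE.
  have sPE := sel_sym (proj1 hPE).
  have h1 A : T A -> forall x, projP ip A (PE x) = 0.
    move=> TA; have hP := proj1 (PAp A TA).
    exact: (K2 lE (sel_lin hP) (sel_bnd hP) (PE0 A TA)).
  have h2 A : T A -> forall x, PE (projP ip A x) = 0.
    move=> TA; exact: (adj_swap (sel_sym (proj1 (PAp A TA))) sPE (symm0) (h1 A TA)).
  have EJ : forall x, E x = 0.
    move=> x; have e1 : J (E x) = E x by rewrite /E (proj2 hJ).
    rewrite -e1 -(projP_fix lE (clR_A lE x)) -/PE.
    exact: (Jperp _ hPE h2).
  have JBJ x : J (B (J x)) = J (B x).
    by have := EJ x; rewrite /E (linB lB) (linB lJ) => /eqP; rewrite subr_eq0 eq_sym => /eqP.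
  move=> x; apply: ip_ext => y.
  transitivity (ip x (J (B y))); first by rewrite sB sJ.
  by symmetry; rewrite -JBJ sJ sB sJ JBJ.
have selBJ : selfadj ip (fun x => B (J x)) := sel_comp hB (proj1 hJ) commJ.
split => //.
- split => //; split.
    move=> A TA; apply: (LE2 selBM (hT A TA) hM) => x /=.
    by rewrite -(hBP A TA) MP.
  move=> G' hG' hG; pose PG := projP ip G'; have lG' := sel_lin hG'.
  have hPG : is_proj ip PG := projP_proj lG'.
  have sPG := sel_sym (proj1 hPG).
  have hGA A : T A -> forall x, A (PG x) = G' x.
    by move=> TA; apply: (LE1 hG' (hG A TA)).
  have PGle A : T A -> forall x, projP ip A (PG x) = PG x.
    move=> TA; apply: (K3 lG' (PAp A TA)) => z.
    by rewrite -(hGA A TA) -(hPB A TA) (proj2 (PAp A TA)).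
  have MPG : forall x, M (PG x) = PG x.
    apply: (adj_swap sPG sM sPG); apply: Mgreat => // P [A [TA ->]].
    apply: (adj_swap (sel_sym (proj1 (PAp A TA))) sPG sPG); exact: PGle.
  apply: (LE2 hG' selBM hPG) => x /=; rewrite MPG.
  transitivity (B (projP ip A0 (PG x))); first by rewrite PGle.
  by rewrite hBP // hGA.
- split => //; split.
    move=> A TA; apply: (LE2 (hT A TA) selBJ (PAp A TA)) => x /=.
    by rewrite JP // hBP.
  move=> G' hG' hG; pose D := fun x => G' x - B x.
  have hD : selfadj ip D := sel_sub hG' hB.
  have hGP A : T A -> forall x, G' (projP ip A x) = A x.
    by move=> TA; apply: (LE1 (hT A TA) (hG A TA)).
  have D0 A : T A -> forall x, D (projP ip A x) = 0.
    by move=> TA x; rewrite /D hGP // hBP // subrr.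
  have PAD A : T A -> forall x, projP ip A (D x) = 0.
    move=> TA; exact: (adj_swap (sel_sym hD) (sel_sym (proj1 (PAp A TA))) symm0 (D0 A TA)).
  pose PD := projP ip D.
  have hPD : is_proj ip PD := projP_proj (sel_lin hD).
  have sPD := sel_sym (proj1 hPD).
  have hPAPD A : T A -> forall x, projP ip A (PD x) = 0.
    move=> TA; have hP := proj1 (PAp A TA).
    exact: (K2 (sel_lin hD) (sel_lin hP) (sel_bnd hP) (PAD A TA)).
  have hPDPA A : T A -> forall x, PD (projP ip A x) = 0.
    move=> TA; exact: (adj_swap (sel_sym (proj1 (PAp A TA))) sPD symm0 (hPAPD A TA)).
  have JPD := Jperp _ hPD hPDPA.
  have PDJ : forall x, PD (J x) = 0 := adj_swap sJ sPD symm0 JPD.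
  apply: (LE2 selBJ hG' (hJ)) => x.
  have : D (J x) = 0 by rewrite -(K1 hD) -/PD PDJ (lin0 (sel_lin hD)).
  by rewrite /D => /eqP; rewrite subr_eq0 => /eqP.
Qed.

End S.

Theorem theorem1 (R : realType) (V : lmodType R[i]) (ip : V -> V -> R[i])
  (hH : is_Hilbert ip) (T : (V -> V) -> Prop) (B : V -> V) :
  (forall A, T A -> selfadj ip A) ->
  (exists A, T A) ->
  selfadj ip B ->
  (forall A, T A -> log_le ip A B) ->
  let M := proj_meet ip (projs_of ip T) in
  let J := proj_join ip (projs_of ip T) in
  [/\ selfadj ip (fun x => B (M x)),
      selfadj ip (fun x => B (J x)),
      is_glb ip T (fun x => B (M x)) &
      is_lub ip T (fun x => B (J x))].
Proof. exact: main. Qed.
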